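(* Consider the semidiscrete DG scheme described in the context on a single element $\Omega_j$. Suppose that at time $t$ the element values $u^h(\cdot,t)\in\Pi^q$, $v^h(\cdot,t)\in\Pi^s$ on $\Omega_j$ are given, and that the boundary states (fluxes) $v^*$ and $\nabla u^*$ on $\partial\Omega_j$ are given. Then the time derivatives $\partial_t u^h$ and $\partial_t v^h$ on $\Omega_j$ are uniquely determined by the equations (1), (2), (3) below (for all admissible test functions), and the discrete energy $E_j^h(t)=\int_{\Omega_j}\tfrac12 (v^h)^2+\tfrac12 c^2|\nabla u^h|^2$ satisfies \begin{multline*} \frac{dE_j^h}{dt}=\int_{\partial\Omega_j}\Big[-\tfrac12 c^2|\nabla u^h|^2\,\mathbf{w}\cdot\mathbf{n}-\tfrac12 (v^h)^2\,\mathbf{w}\cdot\mathbf{n}+c^2(v^*-v^h)\nabla u^h\cdot\mathbf{n}\\ -c^2\nabla u^h\cdot(\nabla u^*-\nabla u^h)\,\mathbf{w}\cdot\mathbf{n}+c^2 v^h\nabla u^*\cdot\mathbf{n}-v^h(v^*-v^h)\,\mathbf{w}\cdot\mathbf{n}\Big]. \end{multline*}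
   Context: Let $m\ge1$, $c>0$ and a constant vector $\mathbf{w}\in\mathbb{R}^m$. The advective wave equation $(\partial_t+\mathbf{w}\cdot\nabla)^2u=c^2\Delta u$ is written as the first-order-in-time system $\partial_t u+\mathbf{w}\cdot\nabla u-v=0$, $\partial_t v+\mathbf{w}\cdot\nabla v-c^2\Delta u=0$. The domain is partitioned into elements $\Omega_j$; $\mathbf{n}$ denotes the outward unit normal on $\partial\Omega_j$. On $\Omega_j$ the approximations $u^h$ and $v^h$ are polynomials of degree $q$ and $s$ respectively ($\Pi^q$, $\Pi^s$ denote the polynomial spaces of degrees $q$, $s$ in $m$ variables). The local scheme on $\Omega_j$ is: for all $\phi_u\in\Pi^q$, all $\phi_v\in\Pi^s$ and all constants $\tilde\phi_u$, (1) $\int_{\Omega_j}c^2\nabla\phi_u\cdot\nabla(\partial_t u^h+\mathbf{w}\cdot\nabla u^h-v^h)=\int_{\partial\Omega_j}c^2(v^*-v^h)\nabla\phi_u\cdot\mathbf{n}-c^2\nabla\phi_u\cdot(\nabla u^*-\nabla u^h)\,\mathbf{w}\cdot\mathbf{n}$, (2) $\int_{\Omega_j}\phi_v\partial_t v^h+\phi_v\mathbf{w}\cdot\nabla v^h+c^2\nabla u^h\cdot\nabla\phi_v=\int_{\partial\Omega_j}c^2\phi_v\nabla u^*\cdot\mathbf{n}-(v^*-v^h)\phi_v\,\mathbf{w}\cdot\mathbf{n}$, (3) $\int_{\Omega_j}\tilde\phi_u(\partial_t u^h+\mathbf{w}\cdot\nabla u^h-v^h)=0$. Here $v^*$ (scalar)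 and $\nabla u^*$ (vector) are given functions on $\partial\Omega_j$ (the numerical fluxes). *)

(* Defs.v *)
From HB Require Import structures.
From mathcomp Require Import all_boot all_order all_algebra.
From mathcomp Require Import mpoly.
From mathcomp Require Import all_classical all_reals all_analysis.

Set Implicit Arguments.
Unset Strict Implicit.
Unset Printing Implicit Defensive.

Import Order.TTheory GRing.Theory Num.Theory.
Local Open Scope ring_scope.

Section DG.
Variables (R : realType) (m : nat).

Local Notation pt := ('I_m -> R).
Local Notation poly := (mpoly.mpoly m R).

Definition inPi (q : nat) (p : poly) : Prop :=
  forall mono : mpoly.multinom m, mono \in mpoly.msupp p -> (mpoly.mdeg mono <= q)%N.

Definition ev (p : poly) (x : pt) : R := mpoly.meval x p.

Definition grad (p : poly) (x : pt) : pt := fun k => ev (mpoly.mderiv k p) x.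

Definition dotp (a b : pt) : R := \sum_(k < m) a k * b k.

Definition advect (w : pt) (p : poly) : poly :=
  \sum_(k < m) w k *: mpoly.mderiv k p.

(* Abstract description of one element Omega_j:
   vol f  = \int_{Omega_j} f,   bdry f = \int_{\partial Omega_j} f,
   nrm x  = outward unit normal n at the boundary point x.
   Required properties: linearity of both integrals, the divergence (Gauss)
   theorem for polynomial integrands, and nondegeneracy of the volume
   integral on polynomials (Omega_j has nonempty interior). *)
Definition element_integrals (vol bdry : (pt -> R) -> R) (nrm : pt -> pt) : Prop :=
  [/\ (forall f g, vol (fun x => f x + g x) = vol f + vol g) /\
        (forall (a : R) f, vol (fun x => a * f x) = a * vol f),
      (forall f g, bdry (fun x => f x + g x) = bdry f + bdry g) /\
        (forall (a : R) f, bdry (fun x => a * f x) = a * bdry f),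
      (forall (p : poly) (k : 'I_m),
          vol (fun x => ev (mpoly.mderiv k p) x) = bdry (fun x => ev p x * nrm x k)),
      (forall p : poly, 0 <= vol (fun x => ev p x ^+ 2)) &
      (forall p : poly, vol (fun x => ev p x ^+ 2) = 0 -> p = 0)].

(* The local DG scheme (1),(2),(3) on the element, at a fixed time:
   u, v = current element values, du, dv = candidate time derivatives,
   vs = v^*, gs = grad u^*. *)
Definition dg_scheme (q s : nat) (c : R) (w : pt)
    (vol bdry : (pt -> R) -> R) (nrm : pt -> pt)
    (u v du dv : poly) (vs : pt -> R) (gs : pt -> pt) : Prop :=
  let r := du + advect w u - v in
  [/\
      (forall phi : poly, inPi q phi ->
         vol (fun x => c ^+ 2 * dotp (grad phi x) (grad r x)) =
         bdry (fun x => c ^+ 2 * (vs x - ev v x) * dotp (grad phi x) (nrm x)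
                        - c ^+ 2 * dotp (grad phi x) (fun k => gs x k - grad u x k)
                          * dotp w (nrm x))),
      (forall phi : poly, inPi s phi ->
         vol (fun x => ev phi x * ev dv x + ev phi x * ev (advect w v) x
                       + c ^+ 2 * dotp (grad u x) (grad phi x)) =
         bdry (fun x => c ^+ 2 * ev phi x * dotp (gs x) (nrm x)
                        - (vs x - ev v x) * ev phi x * dotp w (nrm x))) &
      (forall a : R, vol (fun x => a * ev r x) = 0)].

Definition has_tderiv (P : R -> poly) (t : R) (dP : poly) : Prop :=
  forall mono : mpoly.multinom m,
    is_derive t 1 (fun tau => mpoly.mcoeff mono (P tau)) (mpoly.mcoeff mono dP).

Definition energy (vol : (pt -> R) -> R) (c : R) (U V : R -> poly) (tau : R) : R :=
  vol (fun x => 2^-1 * ev (V tau) x ^+ 2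
                + 2^-1 * c ^+ 2 * dotp (grad (U tau) x) (grad (U tau) x)).

Definition energy_flux (c : R) (w : pt) (nrm : pt -> pt)
    (u v : poly) (vs : pt -> R) (gs : pt -> pt) (x : pt) : R :=
  - 2^-1 * c ^+ 2 * dotp (grad u x) (grad u x) * dotp w (nrm x)
  - 2^-1 * ev v x ^+ 2 * dotp w (nrm x)
  + c ^+ 2 * (vs x - ev v x) * dotp (grad u x) (nrm x)
  - c ^+ 2 * dotp (grad u x) (fun k => gs x k - grad u x k) * dotp w (nrm x)
  + c ^+ 2 * ev v x * dotp (gs x) (nrm x)
  - ev v x * (vs x - ev v x) * dotp w (nrm x).

End DG.

(* Main.v *)
Require Import Defs.
From HB Require Import structures.
From mathcomp Require Import all_boot all_order all_algebra.
From mathcomp Require Import mpoly.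
From mathcomp Require Import all_classical all_reals all_analysis.
From mathcomp Require Import ring lra.
Import Order.TTheory GRing.Theory Num.Theory.
Local Open Scope ring_scope.


Section LA.
Variable R : realType.

Lemma sum_enum (I : finType) (F : I -> R) :
  \sum_(l : I) F l = \sum_(i < #|{: I}|) F (enum_val i).
Proof.
rewrite (reindex (@enum_val I (pred_of_simpl predT))) //; apply: onW_bij; apply: enum_val_bij.
Qed.

Lemma solve_fin (I : finType) (A : I -> I -> R) :
  (forall x : I -> R, (forall k, \sum_l A k l * x l = 0) -> forall l, x l = 0) ->
  forall b : I -> R, exists x : I -> R, forall k, \sum_l A k l * x l = b k.
Proof.
move=> inj b.
pose M : 'M[R]_#|{: I}| := \matrix_(i, j) A (enum_val j) (enum_val i).
have key : forall y : 'rV_#|{: I}|, y *m M = 0 -> y = 0.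
  move=> y hy; apply/rowP => i.
  rewrite mxE -(enum_valK i).
  apply: (inj (fun l => y 0 (enum_rank l))) => k.
  have E : \sum_l A k l * y 0 (enum_rank l) = (y *m M) 0 (enum_rank k).
    rewrite mxE (@sum_enum _ (fun l => A k l * y 0 (enum_rank l))).
    by apply: eq_bigr => j _; rewrite enum_valK mxE enum_rankK mulrC.
  by rewrite E hy mxE.
have Mfree : row_free M.
  rewrite -kermx_eq0; apply/eqP/row_matrixP => i; rewrite row0; apply: key.
  by rewrite -row_mul mulmx_ker row0.
have Mu : M \in unitmx by rewrite -row_free_unit.
pose bb : 'rV_#|{: I}| := \row_j b (enum_val j).
have [y yM] : exists y, y *m M = bb by exists (bb *m invmx M); rewrite mulmxKV.
exists (fun l => y 0 (enum_rank l)) => k.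
have E : \sum_l A k l * y 0 (enum_rank l) = (y *m M) 0 (enum_rank k).
  rewrite mxE (@sum_enum _ (fun l => A k l * y 0 (enum_rank l))).
  by apply: eq_bigr => j _; rewrite enum_valK mxE enum_rankK mulrC.
by rewrite E yM mxE enum_rankK.
Qed.

End LA.


Section Lin.
Variables (R : realType) (m : nat).
Local Notation pt := ('I_m -> R).
Local Notation poly := ({mpoly R[m]}).

Definition islin (L : (pt -> R) -> R) :=
  (forall f g, L (fun x => f x + g x) = L f + L g) /\
  (forall (a : R) f, L (fun x => a * f x) = a * L f).

Variables (L : (pt -> R) -> R) (hL : islin L).

Lemma lin_ext f g : (forall x, f x = g x) -> L f = L g.
Proof. by move=> e; congr L; apply: funext. Qed.

Lemma lin0 : L (fun _ => 0) = 0.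
Proof.
case: hL => _ hZ.
transitivity (L (fun x => 0 * (fun _ => 0) x)).
  by apply: lin_ext => x; rewrite mul0r.
by rewrite hZ mul0r.
Qed.

Lemma linD f g : L (fun x => f x + g x) = L f + L g.
Proof. by case: hL. Qed.

Lemma linZ a f : L (fun x => a * f x) = a * L f.
Proof. by case: hL. Qed.

Lemma linZr a f : L (fun x => f x * a) = L f * a.
Proof. by rewrite mulrC -linZ; apply: lin_ext => x; rewrite mulrC. Qed.

Lemma linN f : L (fun x => - f x) = - L f.
Proof. by rewrite -mulN1r -linZ; apply: lin_ext => x; rewrite mulN1r. Qed.

Lemma linB f g : L (fun x => f x - g x) = L f - L g.
Proof. by rewrite linD linN. Qed.

Lemma lin_sum (I : finType) (F : I -> pt -> R) :
  L (fun x => \sum_i F i x) = \sum_i L (F i).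
Proof.
rewrite /index_enum; elim: (Finite.enum I) => [|i s IH].
  rewrite big_nil; transitivity (L (fun _ => 0)); last exact: lin0.
  by apply: lin_ext => x; rewrite big_nil.
rewrite big_cons -IH -linD; apply: lin_ext => x; by rewrite big_cons.
Qed.

End Lin.

Section Poly.
Variables (R : realType) (m : nat).
Local Notation pt := ('I_m -> R).
Local Notation poly := ({mpoly R[m]}).

Lemma evL (a : R) (p q : poly) x : ev (a *: p + q) x = a * ev p x + ev q x.
Proof. by rewrite /ev mevalD mevalZ. Qed.

Lemma gradL (a : R) (p q : poly) x :
  grad (a *: p + q) x = (fun k => a * grad p x k + grad q x k).
Proof. by apply: funext => k; rewrite /grad mderivD mderivZ evL. Qed.

Lemma dotpC (f g : pt) : dotp f g = dotp g f.
Proof. by apply: eq_bigr => k _; rewrite mulrC. Qed.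

Lemma dotpL (a : R) (f g h : pt) :
  dotp (fun k => a * f k + g k) h = a * dotp f h + dotp g h.
Proof.
rewrite /dotp mulr_sumr -big_split; apply: eq_bigr => k _ /=.
by rewrite mulrDl mulrA.
Qed.

Lemma dotpR (a : R) (f g h : pt) :
  dotp h (fun k => a * f k + g k) = a * dotp h f + dotp h g.
Proof. by rewrite dotpC dotpL !(dotpC h). Qed.

Lemma dotp0 (h : pt) : dotp (fun _ => 0) h = 0.
Proof. by rewrite /dotp big1 // => k _; rewrite mul0r. Qed.

Lemma grad_cst (c : R) x : grad (c%:MP : poly) x = (fun _ => 0).
Proof. by apply: funext => k; rewrite /grad mderivC /ev meval0. Qed.

Definition plin (f : poly -> R) := forall (a : R) p q, f (a *: p + q) = a * f p + f q.

Lemma plin0 f : plin f -> f 0 = 0.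
Proof.
move=> hf; have := hf (-1) 0 0.
by rewrite scaler0 addr0 mulN1r addNr.
Qed.

Lemma plin_sum (I : finType) f (x : I -> R) (e : I -> poly) : plin f ->
  f (\sum_i x i *: e i) = \sum_i x i * f (e i).
Proof.
move=> hf; rewrite /index_enum; elim: (Finite.enum I) => [|i s IH].
  by rewrite !big_nil plin0.
by rewrite !big_cons hf IH.
Qed.

Lemma plinB f p q : plin f -> f (p - q) = f p - f q.
Proof.
move=> hf; have := hf (-1) q p.
by rewrite scaleN1r mulN1r (addrC (- q)) (addrC (- f q)) => ->.
Qed.

Lemma inPi_msize q (p : poly) : inPi q p -> (msize p <= q.+1)%N.
Proof.
move=> h; rewrite msizeE; apply/bigmax_leqP_seq => i Hi _.
by rewrite ltnS; apply: h.
Qed.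

Lemma mspan q (p : poly) : inPi q p ->
  p = \sum_(i : 'X_{1..m < q.+1}) p@_i *: 'X_[i].
Proof. by move/inPi_msize => h; apply: mpolywE. Qed.

Lemma coef_comb q (x : 'X_{1..m < q.+1} -> R) (k : 'X_{1..m < q.+1}) :
  (\sum_i x i *: 'X_[i] : poly)@_k = x k.
Proof.
rewrite raddf_sum (bigD1 k) //= mcoeffZ mcoeffX eqxx mulr1 big1 ?addr0 //.
move=> i ik; rewrite mcoeffZ mcoeffX.
by rewrite -bmeqP (negbTE ik) mulr0.
Qed.

Lemma inPi_comb q (x : 'X_{1..m < q.+1} -> R) :
  inPi q (\sum_i x i *: 'X_[i] : poly).
Proof.
move=> mo; rewrite mcoeff_msupp (raddf_sum (mcoeff mo)) => /eqP nz.
case: (boolP [exists i : 'X_{1..m < q.+1}, bmnm i == mo]) => [/existsP [i /eqP <-]|].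
  by rewrite -ltnS; apply: bmdeg.
rewrite negb_exists => /forallP H; exfalso; apply: nz; apply: big1 => i _.
by apply: (etrans (mcoeffZ _ _ _)); rewrite mcoeffX (negbTE (H i)) mulr0.
Qed.

Lemma inPiB q (p p' : poly) : inPi q p -> inPi q p' -> inPi q (p - p').
Proof.
move=> h h'; rewrite (@mspan q _ h) (@mspan q _ h') -sumrB.
have -> : \sum_(i : 'X_{1..m < q.+1}) (p@_i *: 'X_[i] - p'@_i *: 'X_[i]) =
  \sum_(i : 'X_{1..m < q.+1}) (p@_i - p'@_i) *: ('X_[i] : poly).
  by apply: eq_bigr => i _; rewrite scalerBl.
exact: inPi_comb.
Qed.

Lemma mderiv0_const (p : poly) : (forall k, p^`M(k) = 0) -> p = (p@_0)%:MP.
Proof.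
move=> h; apply/mpolyP => mo; rewrite mcoeffC.
case: (eqVneq mo 0%MM) => [->|nz]; first by rewrite mulr1.
rewrite mulr0.
have [k hk] : exists k, mo k != 0%N.
  case: (boolP [exists k, mo k != 0%N]) => [/existsP //|].
  rewrite negb_exists => /forallP H; exfalso; move/eqP: nz; apply.
  by apply/mnmP => j; rewrite mnm0E; move: (H j); rewrite negbK => /eqP.
have le : (U_(k) <= mo)%MM by rewrite lep1mP.
have := congr1 (mcoeff (mo - U_(k))%MM) (h k).
rewrite mcoeff_deriv mcoeff0 submK // => /eqP; rewrite mulrn_eq0 /=.
by move/eqP.
Qed.

End Poly.

Arguments lin_ext {R m L} f g.
Arguments lin0 {R m L} hL.
Arguments linD {R m L} hL f g.
Arguments linZ {R m L} hL a f.
Arguments linZr {R m L} hL a f.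
Arguments linN {R m L} hL f.
Arguments linB {R m L} hL f g.
Arguments lin_sum {R m L} hL {I} F.
Arguments plin {R m} f.
Arguments plin_sum {R m I} f x e.
Arguments plinB {R m} f p q.
Arguments mspan {R m q p}.
Arguments islin {R m} L.
Arguments mderiv0_const {R m p}.
Arguments evL {R m}.
Arguments gradL {R m}.
Arguments dotpC {R m}.
Arguments dotpL {R m}.
Arguments dotpR {R m}.
Arguments dotp0 {R m}.
Arguments grad_cst {R m}.
Arguments coef_comb {R m q}.
Arguments inPi_comb {R m q}.
Arguments inPiB {R m q p p'}.
Arguments plin0 {R m}.


Section Der.
Variables (R : realType) (m : nat).
Local Notation pt := ('I_m -> R).
Local Notation poly := ({mpoly R[m]}).

Lemma is_derive_sumI (I : finType) (h : I -> R -> R) (dh : I -> R) (t : R) :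
  (forall i, is_derive t 1 (h i) (dh i)) ->
  is_derive t 1 (fun tau => \sum_i h i tau) (\sum_i dh i).
Proof.
move=> H; rewrite -fct_sumE.
by elim/big_ind2 : _ => // [|f1 d1 f2 d2 H1 H2]; [exact: is_derive_cst|exact: is_deriveD].
Qed.

Lemma tderiv_inPi q (P : R -> poly) t dP :
  (forall tau, inPi q (P tau)) -> has_tderiv P t dP -> inPi q dP.
Proof.
move=> hP hd mo; rewrite mcoeff_msupp => nz.
case: (leqP (mdeg mo) q) => // lt; exfalso; move: nz; apply/negP; rewrite negbK.
have H := hd mo.
have e : (fun tau => (P tau)@_mo) = cst 0.
  apply: funext => tau /=; apply/eqP; rewrite -[_ == _]negbK -mcoeff_msupp.
  by apply/negP => /(hP tau); rewrite leqNgt lt.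
rewrite e in H.
by rewrite -(@derive_val _ _ _ _ _ _ _ H) derive_cst.
Qed.

Lemma bil_expand q (B : poly -> poly -> R)
  (hB1 : forall p, plin (fun r => B r p)) (hB2 : forall p, plin (fun r => B p r))
  (x y : 'X_{1..m < q.+1} -> R) :
  B (\sum_i x i *: 'X_[i]) (\sum_j y j *: 'X_[j]) =
  \sum_i \sum_j x i * y j * B 'X_[i] 'X_[j].
Proof.
rewrite (plin_sum (fun r => B r _) x (fun i => 'X_[bmnm i]) (hB1 _)).
apply: eq_bigr => i _ /=.
rewrite (plin_sum (fun r => B _ r) y (fun i => 'X_[bmnm i]) (hB2 _)) mulr_sumr.
by apply: eq_bigr => j _; rewrite mulrA.
Qed.

Lemma deriv_bil q (B : poly -> poly -> R)
  (hB1 : forall p, plin (fun r => B r p)) (hB2 : forall p, plin (fun r => B p r))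
  (P : R -> poly) (t : R) (dP : poly) :
  (forall tau, inPi q (P tau)) -> has_tderiv P t dP ->
  is_derive t 1 (fun tau => B (P tau) (P tau)) (B dP (P t) + B (P t) dP).
Proof.
move=> hP hd.
have hdP := @tderiv_inPi q P t dP hP hd.
have E : (fun tau => B (P tau) (P tau)) = (fun tau =>
   \sum_(i : 'X_{1..m < q.+1}) \sum_(j : 'X_{1..m < q.+1})
       (P tau)@_i * (P tau)@_j * B 'X_[i] 'X_[j]).
  apply: funext => tau.
  by rewrite {1 2}(mspan (hP tau)) (bil_expand _ _ hB1 hB2).
rewrite E (mspan hdP) (mspan (hP t)) !(bil_expand _ _ hB1 hB2) -big_split /=.
apply: is_derive_sumI => i.
rewrite -big_split /=.
apply: is_derive_sumI => j.
have H := is_deriveM (is_deriveM (hd i) (hd j)) (is_derive_cst (B 'X_[i] 'X_[j]) t 1).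
apply: is_derive_eq H _.
rewrite /GRing.scale /= !mulr0 add0r; ring.
Qed.

End Der.

Section DG1.
Variables (R : realType) (m : nat).
Local Notation pt := ('I_m -> R).
Local Notation poly := ({mpoly R[m]}).
Variables (vol bdry : (pt -> R) -> R) (nrm : pt -> pt).
Hypothesis hE : element_integrals vol bdry nrm.

Lemma hvol : islin vol. Proof. by case: hE. Qed.
Lemma hbdry : islin bdry. Proof. by case: hE. Qed.

Definition bet (p q : poly) := vol (fun x => ev p x * ev q x).
Definition gam (p q : poly) := vol (fun x => dotp (grad p x) (grad q x)).
Definition mu (p : poly) := vol (fun x => ev p x).

Lemma betL q : plin (fun p => bet p q).
Proof.
move=> a p1 p2; rewrite /bet -(linZ hvol) -(linD hvol).
by apply: lin_ext => x; rewrite evL mulrDl mulrA.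
Qed.

Lemma betR p : plin (fun q => bet p q).
Proof.
move=> a p1 p2; rewrite /bet -(linZ hvol) -(linD hvol).
by apply: lin_ext => x; rewrite evL; ring.
Qed.

Lemma betC p q : bet p q = bet q p.
Proof. by apply: lin_ext => x; rewrite mulrC. Qed.

Lemma gamL q : plin (fun p => gam p q).
Proof.
move=> a p1 p2; rewrite /gam -(linZ hvol) -(linD hvol).
by apply: lin_ext => x; rewrite gradL dotpL.
Qed.

Lemma gamR p : plin (fun q => gam p q).
Proof.
move=> a p1 p2; rewrite /gam -(linZ hvol) -(linD hvol).
by apply: lin_ext => x; rewrite gradL dotpR.
Qed.

Lemma gamC p q : gam p q = gam q p.
Proof. by apply: lin_ext => x; rewrite dotpC. Qed.

Lemma muL : plin mu.
Proof.
move=> a p1 p2; rewrite /mu -(linZ hvol) -(linD hvol).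
by apply: lin_ext => x; rewrite evL.
Qed.

Lemma gam_cst c p : gam c%:MP p = 0.
Proof.
rewrite /gam -(lin0 hvol); apply: lin_ext => x.
by rewrite grad_cst dotp0.
Qed.

Lemma inPi_cst q c : inPi q (c%:MP : poly).
Proof.
move=> mo; rewrite mcoeff_msupp mcoeffC.
case: (eqVneq mo 0%MM) => [->|nz]; first by rewrite mdeg0.
by rewrite mulr0 eqxx.
Qed.

Lemma vol1_gt0 : 0 < vol (fun _ => 1).
Proof.
case: hE => _ _ _ hpos hnd.
have e : vol (fun _ => 1) = vol (fun x => ev (1%:MP : poly) x ^+ 2).
  by apply: lin_ext => x; rewrite /ev mevalC expr1n.
rewrite lt0r e hpos andbT; apply/eqP => /hnd /eqP.
by rewrite mpolyC_eq0 oner_eq0.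
Qed.

Lemma mu_cst c : mu c%:MP = c * vol (fun _ => 1).
Proof.
by rewrite /mu -(linZ hvol); apply: lin_ext => x; rewrite /ev mevalC mulr1.
Qed.

Lemma bet_self p : bet p p = vol (fun x => ev p x ^+ 2).
Proof. by apply: lin_ext => x; rewrite expr2. Qed.

Lemma bet_self_ge0 p : 0 <= bet p p.
Proof. by rewrite bet_self; case: hE => _ _ _ hpos _; apply: hpos. Qed.

Lemma bet_self_eq0 p : bet p p = 0 -> p = 0.
Proof. by rewrite bet_self; case: hE => _ _ _ _ hnd; apply: hnd. Qed.

Lemma gam_self p : gam p p = \sum_k bet p^`M(k) p^`M(k).
Proof. by rewrite /gam -(lin_sum hvol). Qed.

Lemma gam_self_ge0 p : 0 <= gam p p.
Proof. by rewrite gam_self; apply: sumr_ge0 => k _; apply: bet_self_ge0. Qed.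

Lemma key_q p : gam p p = 0 -> mu p = 0 -> p = 0.
Proof.
rewrite gam_self => h0 hmu.
have hk : forall k, p^`M(k) = 0.
  move=> k; apply: bet_self_eq0.
  by apply: (psumr_eq0P _ h0) => // i _; apply: bet_self_ge0.
have pc := mderiv0_const hk.
move: hmu; rewrite pc mu_cst => /eqP; rewrite mulf_eq0 (gt_eqF vol1_gt0) orbF.
by move/eqP ->; rewrite mpolyC0.
Qed.


Lemma gamLe q a p1 p2 : gam (a *: p1 + p2) q = a * gam p1 q + gam p2 q.
Proof. exact: gamL. Qed.
Lemma gamRe p a q1 q2 : gam p (a *: q1 + q2) = a * gam p q1 + gam p q2.
Proof. exact: gamR. Qed.
Lemma betLe q a p1 p2 : bet (a *: p1 + p2) q = a * bet p1 q + bet p2 q.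
Proof. exact: betL. Qed.
Lemma betRe p a q1 q2 : bet p (a *: q1 + q2) = a * bet p q1 + bet p q2.
Proof. exact: betR. Qed.
Lemma muLe a p1 p2 : mu (a *: p1 + p2) = a * mu p1 + mu p2.
Proof. exact: muL. Qed.

Variables (q s : nat) (c : R) (w : pt) (u v : poly) (vs : pt -> R) (gs : pt -> pt).
Hypotheses (hc : 0 < c) (hu : inPi q u) (hv : inPi s v).

Definition F1 (phi : poly) := bdry (fun x => c ^+ 2 * (vs x - ev v x) * dotp (grad phi x) (nrm x)
                        - c ^+ 2 * dotp (grad phi x) (fun k => gs x k - grad u x k)
                          * dotp w (nrm x)).
Definition G2 (phi : poly) := bdry (fun x => c ^+ 2 * ev phi x * dotp (gs x) (nrm x)
                        - (vs x - ev v x) * ev phi x * dotp w (nrm x)).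
Definition g0 := advect w u - v.

Lemma F1e a p1 p2 : F1 (a *: p1 + p2) = a * F1 p1 + F1 p2.
Proof.
rewrite /F1 -(linZ hbdry) -(linD hbdry); apply: lin_ext => x.
rewrite gradL !dotpL; ring.
Qed.

Lemma F1cst : F1 1%:MP = 0.
Proof.
rewrite /F1 -(lin0 hbdry); apply: lin_ext => x.
rewrite grad_cst !dotp0; ring.
Qed.

Lemma G2e a p1 p2 : G2 (a *: p1 + p2) = a * G2 p1 + G2 p2.
Proof.
rewrite /G2 -(linZ hbdry) -(linD hbdry); apply: lin_ext => x.
rewrite evL; ring.
Qed.

Lemma LHS1 phi d : vol (fun x => c ^+ 2 * dotp (grad phi x) (grad (d + advect w u - v) x))
  = c ^+ 2 * (gam phi d + gam phi g0).
Proof.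
have -> : d + advect w u - v = 1 *: d + g0 by rewrite scale1r /g0 addrA.
rewrite /gam -(linD hvol) -(linZ hvol); apply: lin_ext => x.
by rewrite gradL dotpR mul1r.
Qed.

Lemma LHS3 a d : vol (fun x => a * ev (d + advect w u - v) x) = a * (mu d + mu g0).
Proof.
have -> : d + advect w u - v = 1 *: d + g0 by rewrite scale1r /g0 addrA.
rewrite /mu -(linD hvol) -(linZ hvol); apply: lin_ext => x.
by rewrite evL mul1r.
Qed.

Lemma LHS2 phi d : vol (fun x => ev phi x * ev d x + ev phi x * ev (advect w v) x
                       + c ^+ 2 * dotp (grad u x) (grad phi x)) =
   bet phi d + bet phi (advect w v) + c ^+ 2 * gam u phi.
Proof. by rewrite /bet /gam -(linZ hvol) -!(linD hvol). Qed.

Lemma mu1 : mu 1%:MP = vol (fun _ => 1).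
Proof. by rewrite mu_cst mul1r. Qed.

Lemma comb_eq0 q' (y : 'X_{1..m < q'.+1} -> R) : (\sum_l y l *: 'X_[l] : poly) = 0 ->
  forall l, y l = 0.
Proof. by move=> h l; rewrite -(coef_comb y l) h mcoeff0. Qed.

Lemma span_zero q' (T : poly -> R) : plin T ->
  (forall k : 'X_{1..m < q'.+1}, T 'X_[k] = 0) -> forall phi, inPi q' phi -> T phi = 0.
Proof.
move=> hT h0 phi hphi; rewrite (mspan hphi).
rewrite (plin_sum T (fun i : 'X_{1..m < q'.+1} => phi@_i) (fun i => 'X_[bmnm i]) hT).
by apply: big1 => i _; rewrite h0 mulr0.
Qed.

Lemma exist_du : exists du, inPi q du /\
  (forall phi, inPi q phi -> c ^+ 2 * (gam phi du + gam phi g0) = F1 phi) /\ mu du + mu g0 = 0.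
Proof.
pose A := fun k l : 'X_{1..m < q.+1} => gam 'X_[k] 'X_[l] + mu 'X_[k] * mu 'X_[l].
have inj : forall y : 'X_{1..m < q.+1} -> R,
    (forall k, \sum_l A k l * y l = 0) -> forall l, y l = 0.
  move=> y hy.
  pose p := \sum_l y l *: ('X_[bmnm l] : poly).
  have hk : forall k : 'X_{1..m < q.+1}, gam 'X_[k] p + mu 'X_[k] * mu p = 0.
    move=> k; rewrite -(hy k) /p (plin_sum (fun r => gam 'X_[k] r) y (fun i => 'X_[bmnm i]) (gamR _)).
    rewrite (plin_sum mu y (fun i => 'X_[bmnm i]) muL) mulr_sumr -big_split /=.
    by apply: eq_bigr => l _; rewrite /A; ring.
  pose T r := gam r p + mu r * mu p.
  have hT : plin T by move=> a p1 p2; rewrite /T gamLe muLe; ring.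
  have hpp : T p = 0.
    rewrite {1}/p (plin_sum T y (fun i => 'X_[bmnm i]) hT).
    by apply: big1 => i _; rewrite /T /= hk mulr0.
  have g0' := gam_self_ge0 p.
  have hmu : mu p = 0 by move: hpp; rewrite /T; nra.
  have hg : gam p p = 0 by move: hpp; rewrite /T hmu mulr0 addr0.
  apply: comb_eq0; exact: key_q hg hmu.
have [x hx] := @solve_fin R _ A inj
   (fun k => F1 'X_[k] / c ^+ 2 - gam 'X_[k] g0 - mu 'X_[k] * mu g0).
pose du := \sum_l x l *: ('X_[bmnm l] : poly).
have hk : forall k : 'X_{1..m < q.+1},
    gam 'X_[k] du + mu 'X_[k] * mu du = F1 'X_[k] / c ^+ 2 - gam 'X_[k] g0 - mu 'X_[k] * mu g0.
  move=> k; rewrite -hx /du (plin_sum (fun r => gam 'X_[k] r) x (fun i => 'X_[bmnm i]) (gamR _)).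
  rewrite (plin_sum mu x (fun i => 'X_[bmnm i]) muL) mulr_sumr -big_split /=.
  by apply: eq_bigr => l _; rewrite /A; ring.
pose Tr phi := gam phi du + mu phi * mu du - (F1 phi / c ^+ 2 - gam phi g0 - mu phi * mu g0).
have hTr : plin Tr.
  move=> a p1 p2; rewrite /Tr !gamLe muLe F1e; ring.
have hT0 : forall phi, inPi q phi -> Tr phi = 0.
  by apply: span_zero hTr _ => k; rewrite /Tr hk subrr.
have c2 : c ^+ 2 != 0 by rewrite expf_neq0 // gt_eqF.
have hsum : mu du + mu g0 = 0.
  have := hT0 _ (inPi_cst q 1); rewrite /Tr !gam_cst F1cst mu1 mul0r.
  move=> h; have : vol (fun _ => 1) * (mu du + mu g0) = 0 by rewrite -h; ring.
  by move/eqP; rewrite mulf_eq0 (gt_eqF vol1_gt0) /= => /eqP.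
exists du; split; first exact: inPi_comb.
split => // phi hphi.
have := hT0 _ hphi; rewrite /Tr => h.
have -> : gam phi du + gam phi g0 = F1 phi / c ^+ 2.
  have e : mu du = - mu g0 by apply/eqP; rewrite -subr_eq0 opprK hsum.
  move: h; rewrite e => /eqP; rewrite subr_eq0 => /eqP h; lra.
by rewrite mulrC divfK.
Qed.

Lemma uniq_du d1 d2 : inPi q d1 -> inPi q d2 ->
  (forall phi, inPi q phi -> c ^+ 2 * (gam phi d1 + gam phi g0) = c ^+ 2 * (gam phi d2 + gam phi g0)) ->
  mu d1 + mu g0 = mu d2 + mu g0 -> d1 = d2.
Proof.
move=> h1 h2 hg hm.
have c2 : c ^+ 2 != 0 by rewrite expf_neq0 // gt_eqF.
have hd : forall phi, inPi q phi -> gam phi (d1 - d2) = 0.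
  move=> phi hphi; rewrite (plinB (fun r => gam phi r) d1 d2 (gamR phi)).
  by have := hg _ hphi => /(mulfI c2) /addIr ->; rewrite subrr.
have hm' : mu (d1 - d2) = 0 by rewrite (plinB mu d1 d2 muL) (addIr _ hm) subrr.
apply/eqP; rewrite -subr_eq0; apply/eqP; apply: key_q hm'.
exact: hd (inPiB h1 h2).
Qed.

Lemma exist_dv : exists dv, inPi s dv /\
  (forall phi, inPi s phi -> bet phi dv + bet phi (advect w v) + c ^+ 2 * gam u phi = G2 phi).
Proof.
pose A := fun k l : 'X_{1..m < s.+1} => bet 'X_[k] 'X_[l].
have inj : forall y : 'X_{1..m < s.+1} -> R,
    (forall k, \sum_l A k l * y l = 0) -> forall l, y l = 0.
  move=> y hy.
  pose p := \sum_l y l *: ('X_[bmnm l] : poly).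
  have hk : forall k : 'X_{1..m < s.+1}, bet 'X_[k] p = 0.
    move=> k; rewrite -(hy k) /p (plin_sum (fun r => bet 'X_[k] r) y (fun i => 'X_[bmnm i]) (betR _)).
    by apply: eq_bigr => l _; rewrite /A mulrC.
  pose T r := bet r p.
  have hT : plin T by move=> a p1 p2; rewrite /T betLe.
  have hpp : T p = 0.
    rewrite {1}/p (plin_sum T y (fun i => 'X_[bmnm i]) hT).
    by apply: big1 => i _; rewrite /T /= hk mulr0.
  by apply: comb_eq0; apply: bet_self_eq0.
have [x hx] := @solve_fin R _ A inj
   (fun k => G2 'X_[k] - bet 'X_[k] (advect w v) - c ^+ 2 * gam u 'X_[k]).
pose dv := \sum_l x l *: ('X_[bmnm l] : poly).
have hk : forall k : 'X_{1..m < s.+1},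
    bet 'X_[k] dv = G2 'X_[k] - bet 'X_[k] (advect w v) - c ^+ 2 * gam u 'X_[k].
  move=> k; rewrite -hx /dv (plin_sum (fun r => bet 'X_[k] r) x (fun i => 'X_[bmnm i]) (betR _)).
  by apply: eq_bigr => l _; rewrite /A mulrC.
pose Tr phi := bet phi dv + bet phi (advect w v) + c ^+ 2 * gam u phi - G2 phi.
have hTr : plin Tr.
  move=> a p1 p2; rewrite /Tr !betLe gamRe G2e; ring.
have hT0 : forall phi, inPi s phi -> Tr phi = 0.
  by apply: span_zero hTr _ => k; rewrite /Tr hk; ring.
exists dv; split; first exact: inPi_comb.
by move=> phi hphi; apply/eqP; rewrite -subr_eq0; apply/eqP; apply: hT0.
Qed.

Lemma uniq_dv d1 d2 : inPi s d1 -> inPi s d2 ->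
  (forall phi, inPi s phi -> bet phi d1 = bet phi d2) -> d1 = d2.
Proof.
move=> h1 h2 hb.
apply/eqP; rewrite -subr_eq0; apply/eqP; apply: bet_self_eq0.
by rewrite (plinB (fun r => bet (d1 - d2) r) d1 d2 (betR _)) (hb _ (inPiB h1 h2)) subrr.
Qed.

Lemma scheme_iff du dv :
  dg_scheme q s c w vol bdry nrm u v du dv vs gs <->
  [/\ forall phi, inPi q phi -> c ^+ 2 * (gam phi du + gam phi g0) = F1 phi,
      forall phi, inPi s phi -> bet phi dv + bet phi (advect w v) + c ^+ 2 * gam u phi = G2 phi &
      mu du + mu g0 = 0].
Proof.
rewrite /dg_scheme /=; split.
  case=> h1 h2 h3; split.
  - by move=> phi hphi; rewrite -LHS1 h1.
  - by move=> phi hphi; rewrite -LHS2 h2.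
  - by have := h3 1; rewrite LHS3 mul1r.
case=> h1 h2 h3; split.
- by move=> phi hphi; rewrite LHS1 h1.
- by move=> phi hphi; rewrite LHS2 h2.
- by move=> a; rewrite LHS3 h3 mulr0.
Qed.

Lemma part1 : exists du dv, [/\ inPi q du, inPi s dv,
     dg_scheme q s c w vol bdry nrm u v du dv vs gs &
     forall du' dv', inPi q du' -> inPi s dv' ->
       dg_scheme q s c w vol bdry nrm u v du' dv' vs gs ->
       du' = du /\ dv' = dv].
Proof.
have [du [hdu [h1 h3]]] := exist_du.
have [dv [hdv h2]] := exist_dv.
exists du, dv; split => //; first by apply/scheme_iff.
move=> du' dv' hdu' hdv' /scheme_iff [h1' h2' h3']; split.
  apply: uniq_du => //; last by rewrite h3 h3'.
  by move=> phi hphi; rewrite h1 // h1'.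
apply: uniq_dv => // phi hphi.
have := h2' _ hphi; rewrite -(h2 _ hphi) => /addIr /addIr //.
Qed.

Lemma ev_plin x : plin (fun p : poly => ev p x).
Proof. by move=> a p1 p2; rewrite evL. Qed.

Lemma evd_plin k x : plin (fun p : poly => ev (p^`M(k)) x).
Proof. by move=> a p1 p2; rewrite mderivD mderivZ evL. Qed.

Lemma gauss (P : poly) :
  vol (fun x => \sum_k w k * ev (P^`M(k)) x) = bdry (fun x => ev P x * dotp w (nrm x)).
Proof.
case: hE => _ _ hG _ _.
rewrite (lin_sum hvol).
transitivity (bdry (fun x => \sum_k w k * (ev P x * nrm x k))); last first.
  by apply: lin_ext => x; rewrite /dotp mulr_sumr; apply: eq_bigr => k _; ring.
rewrite (lin_sum hbdry); apply: eq_bigr => k _.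
by rewrite (linZ hvol) (linZ hbdry) hG.
Qed.

Lemma gauss1 (p : poly) :
  bet p (advect w p) = bdry (fun x => 2^-1 * ev p x ^+ 2 * dotp w (nrm x)).
Proof.
pose Pv := (2^-1 : R) *: (p * p).
transitivity (vol (fun x => \sum_k w k * ev (Pv^`M(k)) x)).
  apply: lin_ext => x; rewrite /advect.
  rewrite (plin_sum (fun r => ev r x) w (fun k => p^`M(k)) (ev_plin x)) mulr_sumr.
  apply: eq_bigr => k _ /=.
  rewrite /Pv mderivZ mderivM /ev mevalZ mevalD !mevalM.
  have h2 : (2 : R) != 0 by rewrite pnatr_eq0.
  by field.
rewrite gauss; apply: lin_ext => x.
rewrite /Pv /ev mevalZ mevalM; ring.
Qed.

Lemma gauss2 (p : poly) :
  gam p (advect w p) = bdry (fun x => 2^-1 * dotp (grad p x) (grad p x) * dotp w (nrm x)).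
Proof.
pose Qu := \sum_j (2^-1 : R) *: (p^`M(j) * p^`M(j)).
transitivity (vol (fun x => \sum_k w k * ev (Qu^`M(k)) x)).
  apply: lin_ext => x; rewrite /gam /dotp /grad /advect.
  transitivity (\sum_j \sum_k w k * (ev (p^`M(j)) x * ev (p^`M(j)^`M(k)) x)).
    apply: eq_bigr => j _.
    rewrite (plin_sum (fun r => ev (r^`M(j)) x) w (fun k => p^`M(k)) (evd_plin j x)) mulr_sumr.
    by apply: eq_bigr => k _ /=; rewrite mderiv_comm; ring.
  rewrite exchange_big; apply: eq_bigr => k _ /=.
  rewrite /Qu (plin_sum (fun r => ev (r^`M(k)) x) (fun _ => 2^-1) (fun j => p^`M(j) * p^`M(j)) (evd_plin k x)).
  rewrite mulr_sumr; apply: eq_bigr => j _ /=.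
  rewrite mderivM /ev mevalD !mevalM.
  have h2 : (2 : R) != 0 by rewrite pnatr_eq0.
  by field.
rewrite gauss; apply: lin_ext => x.
rewrite /Qu (plin_sum (fun r => ev r x) (fun _ => 2^-1) (fun j => p^`M(j) * p^`M(j)) (ev_plin x)).
congr (_ * _); rewrite /dotp mulr_sumr; apply: eq_bigr => j _ /=.
by rewrite /ev mevalM.
Qed.

Lemma part2 (U V : R -> poly) t du dv : U t = u -> V t = v ->
  (forall tau, inPi q (U tau)) -> (forall tau, inPi s (V tau)) ->
  has_tderiv U t du -> has_tderiv V t dv ->
  dg_scheme q s c w vol bdry nrm u v du dv vs gs ->
  is_derive t 1 (energy vol c U V) (bdry (energy_flux c w nrm u v vs gs)).
Proof.
move=> Ut Vt hU hV hdU hdV /scheme_iff [h1 h2 h3].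
have D1 := @deriv_bil R m s bet betL betR V t dv hV hdV.
have D2 := @deriv_bil R m q gam gamL gamR U t du hU hdU.
have D := is_deriveD (is_deriveZ (2^-1) D1) (is_deriveZ (2^-1 * c ^+ 2) D2).
have E : energy vol c U V =
   (2^-1 \*: (fun tau => bet (V tau) (V tau))) + ((2^-1 * c ^+ 2) \*: (fun tau => gam (U tau) (U tau))).
  apply: funext => tau; rewrite /energy /=.
  apply: (@etrans _ _ (2^-1 * bet (V tau) (V tau) + (2^-1 * c ^+ 2) * gam (U tau) (U tau))); last by [].
  rewrite /bet /gam -!(linZ hvol) -(linD hvol); apply: lin_ext => x; ring.
rewrite E; apply: is_derive_eq D _.
rewrite Ut Vt /GRing.scale /= (betC dv) (gamC du).
have e1 := h1 u hu.
have e2 := h2 v hv.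
rewrite /g0 (plinB (fun r => gam u r) _ _ (gamR u)) gauss2 in e1.
rewrite gauss1 in e2.
have two : (2 : R) != 0 by rewrite pnatr_eq0.
transitivity (bet v dv + c ^+ 2 * gam u du); first by field.
transitivity (- c ^+ 2 * bdry (fun x => 2^-1 * dotp (grad u x) (grad u x) * dotp w (nrm x))
  + (-1 * bdry (fun x => 2^-1 * ev v x ^+ 2 * dotp w (nrm x)) + (F1 u + G2 v))).
  rewrite -e1 -e2; ring.
rewrite /F1 /G2 -!(linZ hbdry) -!(linD hbdry); apply: lin_ext => x.
rewrite /energy_flux; ring.
Qed.

End DG1.


Theorem theorem2p1 (R : realType) (m q s : nat) (c : R) (w : 'I_m -> R)
    (vol bdry : (('I_m -> R) -> R) -> R) (nrm : ('I_m -> R) -> ('I_m -> R))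
    (U V : R -> mpoly.mpoly m R)
    (vs : R -> ('I_m -> R) -> R) (gs : R -> ('I_m -> R) -> ('I_m -> R)) (t : R) :
  (0 < m)%N -> 0 < c ->
  element_integrals vol bdry nrm ->
  (forall tau, inPi q (U tau)) -> (forall tau, inPi s (V tau)) ->
  (* the time derivatives are uniquely determined by (1),(2),(3) *)
  (exists du dv, [/\ inPi q du, inPi s dv,
     dg_scheme q s c w vol bdry nrm (U t) (V t) du dv (vs t) (gs t) &
     forall du' dv', inPi q du' -> inPi s dv' ->
       dg_scheme q s c w vol bdry nrm (U t) (V t) du' dv' (vs t) (gs t) ->
       du' = du /\ dv' = dv])
  /\
  (* energy identity *)
  (forall du dv, has_tderiv U t du -> has_tderiv V t dv ->
     dg_scheme q s c w vol bdry nrm (U t) (V t) du dv (vs t) (gs t) ->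
     is_derive t 1 (energy vol c U V)
       (bdry (energy_flux c w nrm (U t) (V t) (vs t) (gs t)))).
Proof.
move=> _ hc hE hU hV; split.
  exact: (@part1 R m vol bdry nrm hE q s c w (U t) (V t) (vs t) (gs t) hc).
move=> du dv hdU hdV hs.
exact: (@part2 R m vol bdry nrm hE q s c w (U t) (V t) (vs t) (gs t) (hU t) (hV t) U V t du dv erefl erefl hU hV hdU hdV hs).
Qed.
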